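(* Let $R$ be a ring with unity and involution $*$, and let $a,b,c\in R$. The following conditions are equivalent. (1) $a$ is left dual $(b,c)$-core invertible. (2) There exists some $x\in Rc$ such that $bxab=b$, $(xab)^*=xab$ and $xabx=x$. (3) There exists some $x\in R$ such that $bxab=b$, $xR=b^*R$ and $Rx\subseteq Rc$. (4) There exists some $x\in R$ such that $bxab=b$, $l(x)=l(b^* )$ and $Rx\subseteq Rc$. (5) There exists some $x\in R$ such that $bxab=b$, $Rx\subseteq Rc$ and $xR\subseteq b^*R$. (6) There exists some $x\in R$ such that $bxab=b$, $Rx\subseteq Rc$ and $l(b^* )\subseteq l(x)$. (7) There exist a projection $q\in R$ and an idempotent $p\in R$ such that $Rb\subseteq Rq\subseteq Rab$, $Rp\subseteq Rc$ and $abR\subseteq pR$. In this case (with $q,p$ as in (7)), for any inner inverse $(ab)^-$ of $ab$, the element $q(ab)^-p$ is a left dual $(b,c)$-core inverse of $a$.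
   Context: An element $a\in R$ is called left dual $(b,c)$-core invertible if there exists $x\in Rc$ such that $bxab=b$ and $(xab)^*=xab$; such an $x$ is called a left dual $(b,c)$-core inverse of $a$ (it need not be unique). For $x\in R$, $l(x)=\{r\in R: rx=0\}$ is the left annihilator of $x$. A projection is an element $q$ with $q^2=q=q^*$. An inner inverse of $y$ is any $z$ with $yzy=y$. *)

(* Defs.v *)
From mathcomp Require Import all_boot all_order all_algebra.
Set Implicit Arguments. Unset Strict Implicit. Unset Printing Implicit Defensive.
Import GRing.Theory.
Local Open Scope ring_scope.

Definition is_involution (R : nzRingType) (star : R -> R) : Prop :=
  [/\ forall x y : R, star (x + y) = star x + star y,
      forall x y : R, star (x * y) = star y * star x &
      forall x : R, star (star x) = x].

Definition in_Rc (R : nzRingType) (x c : R) : Prop := exists s : R, x = s * c.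

Definition lideal_sub (R : nzRingType) (x y : R) : Prop :=
  forall r : R, exists s : R, r * x = s * y.

Definition rideal_sub (R : nzRingType) (x y : R) : Prop :=
  forall r : R, exists s : R, x * r = y * s.

Definition lann (R : nzRingType) (x : R) : R -> Prop := fun r => r * x = 0.
Definition lann_sub (R : nzRingType) (x y : R) : Prop :=
  forall r : R, lann x r -> lann y r.

Definition is_projection (R : nzRingType) (star : R -> R) (q : R) : Prop :=
  q * q = q /\ star q = q.
Definition is_idempotent (R : nzRingType) (p : R) : Prop := p * p = p.

Definition left_dual_core_inverse (R : nzRingType) (star : R -> R) (a b c x : R) : Prop :=
  [/\ in_Rc x c, b * x * a * b = b & star (x * a * b) = x * a * b].

Definition left_dual_core_invertible (R : nzRingType) (star : R -> R) (a b c : R) : Prop :=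
  exists x : R, left_dual_core_inverse star a b c x.

(* Main.v *)
Require Import Defs.
From mathcomp Require Import all_boot all_order all_algebra.
Import GRing.Theory.
Local Open Scope ring_scope.

Lemma final_claim (R : nzRingType) (star : R -> R) (a b c : R) :
  (forall q p : R, is_projection star q -> is_idempotent p ->
     lideal_sub b q -> lideal_sub q (a * b) -> lideal_sub p c -> rideal_sub (a * b) p ->
     forall y : R, (a * b) * y * (a * b) = a * b ->
     left_dual_core_inverse star a b c (q * y * p)).
Proof.
move=> q p [qq sq] pp Hbq Hqab Hpc Habp y Hy.
have [s bs] := Hbq 1; rewrite mul1r in bs.
have [t qt] := Hqab 1; rewrite mul1r in qt.
have [v pv] := Hpc 1; rewrite mul1r in pv.
have [u abu] := Habp 1; rewrite mulr1 in abu.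
have pab : p * (a * b) = a * b by rewrite abu mulrA pp.
have bq : b * q = b by rewrite bs -mulrA qq.
have qyab : q * y * (a * b) = q by rewrite {1}qt -(mulrA t (a * b) y) -(mulrA t) Hy.
have xab : q * y * p * a * b = q by rewrite -(mulrA _ a b) -(mulrA _ p) pab qyab.
split.
- by exists (q * y * v); rewrite pv !mulrA.
- have -> : b * (q * y * p) * a * b = b * (q * y * p * a * b) by rewrite !mulrA.
  by rewrite xab bq.
- by rewrite xab sq.
Qed.

Theorem theorem2p2 (R : nzRingType) (star : R -> R) (a b c : R) :
  is_involution star ->
  [<->
    (* (1) *) left_dual_core_invertible star a b c;
    (* (2) *) exists x : R, [/\ in_Rc x c, b * x * a * b = b,
                 star (x * a * b) = x * a * b & x * a * b * x = x];
    (* (3) *) exists x : R, [/\ b * x * a * b = b,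
                 rideal_sub x (star b) /\ rideal_sub (star b) x & lideal_sub x c];
    (* (4) *) exists x : R, [/\ b * x * a * b = b,
                 (forall r : R, lann x r <-> lann (star b) r) & lideal_sub x c];
    (* (5) *) exists x : R, [/\ b * x * a * b = b, lideal_sub x c & rideal_sub x (star b)];
    (* (6) *) exists x : R, [/\ b * x * a * b = b, lideal_sub x c & lann_sub (star b) x];
    (* (7) *) exists q p : R, [/\ is_projection star q, is_idempotent p,
                 lideal_sub b q /\ lideal_sub q (a * b),
                 lideal_sub p c & rideal_sub (a * b) p]]
  /\
  (forall q p : R, is_projection star q -> is_idempotent p ->
     lideal_sub b q -> lideal_sub q (a * b) -> lideal_sub p c -> rideal_sub (a * b) p ->
     forall y : R, (a * b) * y * (a * b) = a * b ->
     left_dual_core_inverse star a b c (q * y * p)).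
Proof.
move=> [sD sM sK].
have s0 : star 0 = 0.
  by apply/(addrI (star 0)); rewrite -sD !addr0.
have s1 : star 1 = 1.
  by have := sM (star 1) 1; rewrite !mulr1 !sK mulr1 => <-.
have sB : forall x y, star (x - y) = star x - star y.
  move=> x y; apply/(addrI (star y)); rewrite -sD addrC subrK.
  by rewrite addrC subrK.
split; last exact: final_claim.
tfae.
-
  move=> [x [[s xs] H1 H2]].
  have xx : x * a * b * x * a * b = x * a * b.
    by have := congr1 (fun z => x * a * z) H1; rewrite /= !mulrA.
  exists (x * a * b * x); split.
  + by exists (x * a * b * s); rewrite xs !mulrA.
  + by rewrite !mulrA H1 H1.
  + by rewrite xx H2.
  + by rewrite !mulrA !xx.
-
  move=> [x [[s xs] H1 H2 H3]].
  exists x; split => //.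
  + split => r.
    * exists (star a * star x * x * r).
      by rewrite -{1}H3 -H2 !sM !mulrA.
    * exists (a * b * star b * r).
      have e : b * (x * a * b) = b by rewrite !mulrA.
      by rewrite -{1}e sM H2 !mulrA.
  + by move=> r; exists (r * s); rewrite xs mulrA.
-
  move=> [x [H1 [Hxb Hbx] Hc]].
  exists x; split => // r; split; rewrite /lann.
  + move=> rx; have [s e] := Hbx 1; rewrite mulr1 in e; by rewrite e mulrA rx mul0r.
  + move=> rb; have [s e] := Hxb 1; rewrite mulr1 in e; by rewrite e mulrA rb mul0r.
-
  move=> [x [H1 Hl Hc]].
  exists x; split => // r.
  have e : (1 - star (x * a * b)) * star b = 0.
    rewrite -s1 -sB -sM mulrBr mulr1.
    by rewrite !mulrA H1 subrr s0.
  have /Hl e2 := e. rewrite /lann mulrBl mul1r in e2.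
  exists (star a * star x * x * r).
  move/eqP: e2; rewrite subr_eq0 => /eqP e2.
  by rewrite {1}e2 !sM !mulrA.
-
  move=> [x [H1 Hc Hb]].
  exists x; split => // r; rewrite /lann => rb.
  by have [s e] := Hb 1; rewrite mulr1 in e; rewrite e mulrA rb mul0r.
-
  move=> [x [H1 Hc Hl]].
  have [s xs] := Hc 1; rewrite mul1r in xs.
  have H1' : a * b * x * a * b = a * b.
    by have := congr1 (fun z => a * z) H1; rewrite /= !mulrA.
  have e : (1 - star (x * a * b)) * star b = 0.
    rewrite -s1 -sB -sM mulrBr mulr1.
    by rewrite !mulrA H1 subrr s0.
  have e2 := Hl _ e. rewrite /lann mulrBl mul1r in e2.
  move/eqP: e2; rewrite subr_eq0 => /eqP e2.
  have ww : x * a * b * x * a * b = x * a * b.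
    by have := congr1 (fun z => x * a * z) H1; rewrite /= !mulrA.
  have w1 : x * a * b = star (x * a * b) * (x * a * b).
    by rewrite {1}e2 !mulrA.
  have ws : star (x * a * b) = x * a * b.
    by rewrite w1 sM sK -w1.
  exists (x * a * b), (a * b * x); split.
  + by split; [rewrite !mulrA ww | exact ws].
  + by rewrite /is_idempotent !mulrA H1'.
  + split => r.
    * by exists (r * b); rewrite -{1}H1 !mulrA.
    * by exists (r * x); rewrite !mulrA.
  + by move=> r; exists (r * a * b * s); rewrite xs !mulrA.
  + by move=> r; exists (a * b * r); rewrite !mulrA H1'.
-
  move=> [q [p [Hq Hp [Hbq Hqab] Hpc Habp]]].
  have [t qt] := Hqab 1; rewrite mul1r in qt.
  have [s bs] := Hbq 1; rewrite mul1r in bs.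
  have [qq sq] := Hq.
  have bq : b * q = b by rewrite bs -mulrA qq.
  have Hy : a * b * t * (a * b) = a * b by rewrite -mulrA -qt -mulrA bq.
  by exists (q * t * p); apply: final_claim.
Qed.
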